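(* Let $n\in\mathbb N$. The eigenvalues of $n(\mathfrak P^{(n)}_3+\mathfrak P^{(n)}_4)$ are exactly $0,2,4,\dots,2n-2$ if $n$ is odd, and exactly $1,3,5,\dots,2n-1$ if $n$ is even; in particular, all $n$ eigenvalues are simple.
   Context: For $n\in\mathbb N$, $\mathfrak P^{(n)}_1,\dots,\mathfrak P^{(n)}_4\in M_n(\mathbb R)$ denote orthogonal projections (real symmetric idempotent matrices) such that (i) $\mathfrak P^{(n)}_1+\dots+\mathfrak P^{(n)}_4=(2-\frac1n)I_n$; (ii) $\operatorname{rk}\mathfrak P^{(n)}_1=\lfloor\frac n2\rfloor-(-1)^n$ and $\operatorname{rk}\mathfrak P^{(n)}_i=\lfloor\frac n2\rfloor$ for $i=2,3,4$; (iii) the only subspaces of $\mathbb C^n$ invariant under all four matrices are $0$ and $\mathbb C^n$. Such quadruples exist for every $n$, and any two of them are simultaneously unitarily equivalent; moreover, any quadruple of orthogonal projections on a Hilbert space summing to $(2-\frac1n)I$ with no nontrivial common invariant closed subspace is unitarily equivalent to one of the four cyclic shifts $(\mathfrak P^{(n)}_{\sigma(1)},\dots,\mathfrak P^{(n)}_{\sigma(4)})$, $\sigma$ a power of the cycle $(1\,2\,3\,4)$, and these four are pairwise inequivalent. *)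

(* Defs.v *)
From HB Require Import structures.
From mathcomp Require Import all_boot all_order all_algebra.
From mathcomp Require Import reals.
From mathcomp.real_closed Require Import complex.
Set Implicit Arguments. Unset Strict Implicit. Unset Printing Implicit Defensive.
Import Order.TTheory GRing.Theory Num.Theory.
Local Open Scope ring_scope.

Definition orth_proj (R : realType) (n : nat) (P : 'M[R]_n) : Prop :=
  P^T = P /\ P *m P = P.

Definition cplx (R : realType) (n : nat) (P : 'M[R]_n) : 'M[R[i]]_n :=
  map_mx (fun x : R => Complex x 0) P.

(* The subspace of C^n spanned by the rows of U (a row vector u stands for the
   column vector u^T) is invariant under the matrix A acting on column vectors
   x |-> A x, i.e. A (row space of U)^T ⊆ (row space of U)^T; in row form:
   U *m A^T ⊆ U. *)
Definition invariant_subspace (C : fieldType) (n : nat) (U A : 'M[C]_n) : bool :=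
  (U *m A^T <= U)%MS.

Definition irreducible_quadruple (R : realType) (n : nat)
    (P1 P2 P3 P4 : 'M[R]_n) : Prop :=
  forall U : 'M[R[i]]_n,
    invariant_subspace U (cplx P1) -> invariant_subspace U (cplx P2) ->
    invariant_subspace U (cplx P3) -> invariant_subspace U (cplx P4) ->
    (U == (0 : 'M[R[i]]_n))%MS \/ (U == (1%:M : 'M[R[i]]_n))%MS.

(* Main.v *)
Require Import Defs.
From HB Require Import structures.
From mathcomp Require Import all_boot all_order all_algebra.
From mathcomp Require Import reals.
From mathcomp.real_closed Require Import complex.
From mathcomp Require Import ring lra.
Set Implicit Arguments. Unset Strict Implicit. Unset Printing Implicit Defensive.
Import Order.TTheory GRing.Theory Num.Theory.
Local Open Scope ring_scope.

Section Cplx.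
Variable R : realType.
Local Notation C := (R[i]).
Lemma ReD (x y : C) : complex.Re (x + y) = complex.Re x + complex.Re y. Proof. by case: x; case: y. Qed.
Lemma ImD (x y : C) : complex.Im (x + y) = complex.Im x + complex.Im y. Proof. by case: x; case: y. Qed.
Lemma ReMr (u : C) (r : R) : complex.Re (u * (Complex r 0)) = complex.Re u * r.
Proof. by case: u => a b /=; rewrite mulr0 subr0. Qed.
Lemma ImMr (u : C) (r : R) : complex.Im (u * (Complex r 0)) = complex.Im u * r.
Proof. by case: u => a b /=; rewrite mulr0 add0r. Qed.
Lemma ReM (u v : C) : complex.Re (u * v) = complex.Re u * complex.Re v - complex.Im u * complex.Im v.
Proof. by case: u; case: v. Qed.
Lemma ImM (u v : C) : complex.Im (u * v) = complex.Re u * complex.Im v + complex.Im u * complex.Re v.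
Proof. by case: u; case: v. Qed.
Lemma Re_sum I (r : seq I) (P : pred I) (F : I -> C) :
  complex.Re (\sum_(i <- r | P i) F i) = \sum_(i <- r | P i) complex.Re (F i).
Proof. exact: (big_morph _ ReD). Qed.
Lemma Im_sum I (r : seq I) (P : pred I) (F : I -> C) :
  complex.Im (\sum_(i <- r | P i) F i) = \sum_(i <- r | P i) complex.Im (F i).
Proof. exact: (big_morph _ ImD). Qed.

Lemma sqnorm_ge0 n (v : 'rV[R]_n) : 0 <= (v *m v^T) 0 0.
Proof.
rewrite !mxE; apply: sumr_ge0 => i _; rewrite mxE -expr2; exact: sqr_ge0.
Qed.

Lemma sqnorm_eq0 n (v : 'rV[R]_n) : (v *m v^T) 0 0 = 0 -> v = 0.
Proof.
rewrite !mxE => /eqP; rewrite psumr_eq0; last by move=> i _; rewrite mxE -expr2 sqr_ge0.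
move=> /allP H; apply/rowP => i; rewrite mxE.
have := H i (mem_index_enum _); rewrite mxE -expr2 sqrf_eq0 => /eqP; exact.
Qed.

Lemma sym_eig n (A : 'M[R]_n) (z : C) : A^T = A ->
  eigenvalue (map_mx (fun x : R => Complex x 0) A) z -> complex.Im z = 0 /\ eigenvalue A (complex.Re z).
Proof.
move=> sA /eigenvalueP [x Hx x0].
pose a := map_mx (@complex.Re R) x; pose b := map_mx (@complex.Im R) x.
have Ha : a *m A = complex.Re z *: a - complex.Im z *: b.
  apply/rowP => j; have /rowP /(_ j) := Hx; rewrite !mxE => /(congr1 (@complex.Re R)).
  rewrite Re_sum ReM => <-; apply: eq_bigr => k _; by rewrite !mxE ReMr.
have Hb : b *m A = complex.Im z *: a + complex.Re z *: b.
  apply/rowP => j; have /rowP /(_ j) := Hx; rewrite !mxE => /(congr1 (@complex.Im R)).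
  rewrite Im_sum ImM => E; rewrite addrC -E; apply: eq_bigr => k _; by rewrite !mxE ImMr.
have ab0 : (a *m a^T) 0 0 + (b *m b^T) 0 0 != 0.
  apply/negP => /eqP E.
  have Ea : (a *m a^T) 0 0 = 0.
    apply/eqP; rewrite eq_le sqnorm_ge0 andbT -E lerDl sqnorm_ge0 //.
  have Eb : (b *m b^T) 0 0 = 0 by move: E; rewrite Ea add0r.
  move/sqnorm_eq0: Ea => Ea; move/sqnorm_eq0: Eb => Eb.
  move/negP: x0; apply; apply/eqP/rowP => j.
  have /rowP /(_ j) := Ea; have /rowP /(_ j) := Eb; rewrite !mxE.
  by case: (x 0 j) => /= p q -> ->.
have key : (a *m A *m b^T) 0 0 = (b *m A *m a^T) 0 0.
  have -> : b *m A *m a^T = (a *m A *m b^T)^T by rewrite !trmx_mul trmxK sA mulmxA.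
  by rewrite [in RHS]mxE.
have Hab : (a *m b^T) 0 0 = (b *m a^T) 0 0.
  have -> : b *m a^T = (a *m b^T)^T by rewrite !trmx_mul trmxK.
  by rewrite [in RHS]mxE.
have Iz : complex.Im z = 0.
  move: key; rewrite Ha Hb !mulmxBl !mulmxDl -!scalemxAl.
  move: (a *m a^T) (a *m b^T) (b *m a^T) (b *m b^T) Hab ab0 => AA AB BA BB Hab ab0.
  rewrite !mxE Hab => E.
  have : complex.Im z * (AA 0 0 + BB 0 0) = 0 by lra.
  by move/eqP; rewrite mulf_eq0 (negbTE ab0) orbF => /eqP.
split => //.
have [a0|a0] := eqVneq a 0.
  apply/eigenvalueP; exists b => //; last first.
    apply/negP => /eqP b0; move/negP: x0; apply; apply/eqP/rowP => j.
    have /rowP /(_ j) := a0; have /rowP /(_ j) := b0; rewrite !mxE.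
    by case: (x 0 j) => /= p q -> ->.
  by rewrite Hb Iz scale0r add0r.
apply/eigenvalueP; exists a => //.
by rewrite Ha Iz scale0r subr0.
Qed.

Lemma sym_split n (A : 'M[R]_n) : A^T = A ->
  exists s : seq R, char_poly A = \prod_(x <- s) ('X - x%:P).
Proof.
move=> sA.
have [r Hr] := closed_field_poly_normal (char_poly (map_mx (real_complex R) A)).
rewrite (monicP (char_poly_monic _)) scale1r in Hr.
have Hre : forall z, z \in r -> z = real_complex R (complex.Re z).
  move=> z zr.
  have : root (char_poly (map_mx (real_complex R) A)) z by rewrite Hr root_prod_XsubC.
  rewrite -eigenvalue_root_char => /(sym_eig sA) [Iz _].
  by move: Iz; case: z {zr} => p q /= ->.
exists (map (@complex.Re R) r).
apply: (@map_poly_inj _ _ (real_complex R)).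
rewrite map_char_poly Hr map_prod_XsubC big_map.
apply: eq_big_seq => z zr. rewrite {1}(Hre z zr). done.
Qed.

End Cplx.

Lemma tr_idem (F : fieldType) n (P : 'M[F]_n) : P *m P = P -> \tr P = (\rank P)%:R.
Proof.
move=> PP.
have := mulmx_base P; have := row_base_free P; have := col_base_full P.
move: (col_base P) (row_base P) => C B Cf Bf CB.
have BC : B *m C = 1%:M.
  apply: (row_free_inj Bf); rewrite mul1mx.
  apply: (row_full_inj Cf).
  by rewrite !mulmxA CB -mulmxA CB PP.
by rewrite -{1}CB mxtrace_mulC BC mxtrace1.
Qed.

Section Gen.
Variable F : fieldType.

Lemma eig_affine n (M : 'M[F]_n) (k c x : F) :
  eigenvalue M x -> eigenvalue (k *: (M + c%:M)) (k * (x + c)).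
Proof.
move/eigenvalueP=> [v Hv v0]; apply/eigenvalueP; exists v => //.
by rewrite -scalemxAr mulmxDr Hv mul_mx_scalar -scalerDl scalerA.
Qed.

Lemma rank_eig_pos n (M : 'M[F]_n) x :
  (0 < \rank (eigenspace M x))%N = eigenvalue M x.
Proof. by rewrite lt0n mxrank_eq0. Qed.

Lemma rank_step n (U D : 'M[F]_n) (a b l : F) :
  D *m U = a *: D - U *m D ->
  D *m D = 1%:M - (b%:M - U) *m (b%:M - U) ->
  1 - (b - l) ^+ 2 != 0 ->
  (\rank (eigenspace U l) <= \rank (eigenspace U (a - l)))%N.
Proof.
move=> HDU HDD s0.
have HE : eigenspace U l *m U = l *: eigenspace U l by apply/eigenspaceP.
move: (eigenspace U l) HE => E HE.
have H1 : (E *m D <= eigenspace U (a - l))%MS.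
  apply/eigenspaceP; rewrite -mulmxA HDU mulmxBr mulmxA HE -scalemxAl.
  by rewrite -scalemxAr scalerBl.
have HEb : E *m (b%:M - U) = (b - l) *: E.
  by rewrite mulmxBr mul_mx_scalar HE scalerBl.
have H2 : E *m D *m D = (1 - (b - l) ^+ 2) *: E.
  rewrite -mulmxA HDD mulmxBr mulmx1 mulmxA HEb -scalemxAl HEb scalerA.
  by rewrite scalerBl scale1r expr2.
rewrite -(mxrank_scale_nz _ s0) -H2.
exact: leq_trans (mxrankM_maxl _ _) (mxrankS H1).
Qed.

End Gen.

Section Proj.
Variable R : realType.

Lemma proj_anti n (P P' : 'M[R]_n) : P *m P = P -> P' *m P' = P' ->
  (P - P') *m (P + P' - 1%:M) = - ((P + P' - 1%:M) *m (P - P')) /\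
  (P - P') *m (P - P') = 1%:M - (P + P' - 1%:M) *m (P + P' - 1%:M).
Proof.
move=> HP HP'.
rewrite !mulmxBl !mulmxDl !mulmxBr !mulmxDr !mulmx1 !mul1mx HP HP'.
by split; apply/matrixP=> i j; rewrite !mxE; ring.
Qed.

Lemma eig_lb n (P3 P4 : 'M[R]_n) : orth_proj P3 -> orth_proj P4 ->
  forall mu, eigenvalue (P3 + P4) mu -> 0 <= mu.
Proof.
move=> [s3 i3] [s4 i4] mu /eigenvalueP [v Hv v0].
have quad : forall P : 'M[R]_n, P^T = P -> P *m P = P ->
    v *m P *m v^T = (v *m P) *m (v *m P)^T.
  by move=> P sP iP; rewrite trmx_mul sP mulmxA -(mulmxA v P P) iP.
have E : (v *m (P3 + P4) *m v^T) 0 0 = mu * (v *m v^T) 0 0.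
  by rewrite Hv -scalemxAl mxE.
move: E; rewrite mulmxDr mulmxDl mxE (quad P3) // (quad P4) // => E.
have pos : 0 < (v *m v^T) 0 0.
  rewrite lt_neqAle eq_sym sqnorm_ge0 andbT.
  by apply/negP => /eqP /sqnorm_eq0 /eqP; apply/negP.
rewrite -(pmulr_lge0 _ pos) -E.
by apply: addr_ge0; apply: sqnorm_ge0.
Qed.

End Proj.

Section Misc.
Variable R : realType.

Lemma seq_min (s : seq R) : s != [::] ->
  exists2 r, r \in s & forall x, x \in s -> r <= x.
Proof.
elim: s => [//|a s IH] _.
have [->|sn] := eqVneq s [::].
  by exists a; rewrite ?mem_seq1 // => x; rewrite mem_seq1 => /eqP ->.
have [r rs rm] := IH sn.
have [ar|ra] := leP a r.
  exists a; first by rewrite mem_head.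
  move=> x; rewrite in_cons => /orP [/eqP -> //|/rm]; exact: le_trans.
exists r; first by rewrite in_cons rs orbT.
move=> x; rewrite in_cons => /orP [/eqP ->|/rm //]; exact: ltW.
Qed.

Lemma sum_ge (s : seq R) c : (forall x, x \in s -> c <= x) ->
  c *+ size s <= \sum_(x <- s) x.
Proof.
elim: s => [|a s IH] H; first by rewrite big_nil mulr0n.
rewrite big_cons /= mulrS lerD //; first by apply: H; rewrite mem_head.
by apply: IH => x xs; apply: H; rewrite in_cons xs orbT.
Qed.

Lemma sum_iota (r e : R) m :
  \sum_(j <- iota 0 m) (r + 2 * (j%:R * e)) = m%:R * r + m%:R * (m%:R - 1) * e.
Proof.
elim: m => [|m IH]; first by rewrite big_nil !mul0r addr0.
rewrite -addn1 iotaD big_cat IH /= big_cons big_nil add0n natrD; ring.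
Qed.

Lemma sq_ne1 (x : R) : -1 < x -> x < 1 -> 1 - x ^+ 2 != 0.
Proof.
move=> h1 h2.
have -> : 1 - x ^+ 2 = (1 - x) * (1 + x) by ring.
by rewrite mulf_neq0 // lt0r_neq0 //; lra.
Qed.

End Misc.

Unset Implicit Arguments.

Theorem proposition4p4 (R : realType) (n : nat) (P1 P2 P3 P4 : 'M[R]_n) :
  (0 < n)%N ->
  orth_proj P1 -> orth_proj P2 -> orth_proj P3 -> orth_proj P4 ->
  P1 + P2 + P3 + P4 = (2 - n%:R^-1)%:M ->
  (\rank P1)%:Z = (n./2)%:Z - (-1) ^+ n ->
  \rank P2 = n./2 -> \rank P3 = n./2 -> \rank P4 = n./2 ->
  irreducible_quadruple P1 P2 P3 P4 ->
  let A := n%:R *: (P3 + P4) in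
  let ev := fun k : nat => (if odd n then (2 * k)%N%:R else (2 * k + 1)%N%:R) : R in
  (forall a : R, eigenvalue A a <-> exists2 k : nat, (k < n)%N & a = ev k) /\
  (forall k : nat, (k < n)%N -> mup (ev k) (char_poly A) = 1%N).
Proof.
move=> n0 [s1 i1] [s2 i2] h3 h4 Hsum _ _ hr3 hr4 _ A ev.
have h3' := h3; have h4' := h4; move: h3' h4' => [s3 i3] [s4 i4].
pose N : R := n%:R.
have N0 : 0 < N by rewrite ltr0n.
pose e : R := N^-1.
have e0 : 0 < e by rewrite invr_gt0.
have Ne : N * e = 1 by rewrite mulfV // lt0r_neq0.
pose d : R := - e.
pose T := P3 + P4 - 1%:M.
have TQ : T + 1%:M = P3 + P4 by rewrite subrK.
have sT : T^T = T by rewrite /T linearB linearD /= s3 s4 trmx1.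
have [A2 Q2] := proj_anti i3 i4; rewrite -/T in A2 Q2.
have R1 : forall l, 1 - (0 - l) ^+ 2 != 0 ->
    (\rank (eigenspace T l) <= \rank (eigenspace T (0 - l)))%N.
  move=> l hl; apply: (rank_step (D := P3 - P4) (b := 0)) => //.
    by rewrite A2 scale0r sub0r.
  have -> : (0%:M : 'M[R]_n) = 0 by apply/matrixP => i j; rewrite !mxE mul0rn.
  by rewrite Q2 sub0r mulNmx mulmxN opprK.
have U1E : P1 + P2 - 1%:M = d%:M - T.
  have : P1 + P2 = (2 - e)%:M - (P3 + P4) by rewrite -Hsum -(addrA (P1 + P2)) addrK.
  move=> ->; apply/matrixP => i j; rewrite /T /d !mxE.
  case: (i == j); rewrite /= ?mulr1n ?mulr0n; ring.
have [A1 Q1] := proj_anti i1 i2; rewrite U1E in A1 Q1.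
have A1' : (P1 - P2) *m T = (d + d) *: (P1 - P2) - T *m (P1 - P2).
  move: A1; move: (P1 - P2) => D.
  rewrite (mulmxBr D d%:M T) (mulmxBl d%:M T D) mul_mx_scalar mul_scalar_mx => A1.
  apply/matrixP => i j.
  have := congr1 (fun M : 'M[R]_n => M i j) A1; rewrite !mxE => E.
  move: E; set u := D i j; set p := \sum_j0 _; set q := \sum_j0 _.
  move=> E; lra.
have R2 : forall l, 1 - (d - l) ^+ 2 != 0 ->
    (\rank (eigenspace T l) <= \rank (eigenspace T ((d + d) - l)))%N.
  by move=> l hl; apply: (rank_step (D := P1 - P2) (b := d)).
have [s Hs] := sym_split sT.
have eigT : forall x, eigenvalue T x = (x \in s).
  by move=> x; rewrite eigenvalue_root_char Hs root_prod_XsubC.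
have sz : size s = n.
  by have := size_char_poly T; rewrite Hs size_prod_XsubC => -[].
have lbT : forall x, eigenvalue T x -> -1 <= x.
  move=> x /(eig_affine 1 1); rewrite TQ scale1r mul1r => /(eig_lb h3 h4).
  move=> H; lra.
have trT : \tr T = - (odd n)%:R.
  have Hn : N = (odd n)%:R + (n./2)%:R * 2.
    by rewrite /N -{1}(odd_double_half n) natrD -muln2 natrM.
  rewrite /T linearB linearD /= (tr_idem i3) (tr_idem i4) mxtrace1 hr3 hr4 -/N.
  lra.
have trS : \tr T = \sum_(x <- s) x.
  have := char_poly_trace T n0; rewrite Hs.
  have ss : size s != 0%N by rewrite sz -lt0n.
  have := coefPn_prod_XsubC ss; rewrite sz => ->.
  by move/eqP; rewrite eqr_opp => /eqP.
have [r rs rmin] : exists2 r, r \in s & forall x, x \in s -> r <= x.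
  by apply: seq_min; rewrite -size_eq0 sz -lt0n.
have rlb : -1 <= r by apply: lbT; rewrite eigT.
have rlt1 : r < 1.
  rewrite ltNge; apply/negP => r1.
  have := sum_ge (c := 1) (s := s) (fun x xs => le_trans r1 (rmin x xs)).
  rewrite -trS trT sz -/N => H.
  have H' : N <= - (odd n)%:R := H.
  have H2 : 0 <= (odd n)%:R :> R by apply: ler0n.
  move: H' H2; move: ((odd n)%:R : R) => o H' H2. clear -H' H2 N0.
  lra.
have rlt : r < -1 + 2 * e.
  rewrite ltNge; apply/negP => r2.
  have c1 : 1 - (0 - r) ^+ 2 != 0.
    apply: sq_ne1; clear -r2 rlt1 e0; lra.
  have c2 : 1 - (d - (0 - r)) ^+ 2 != 0.
    apply: sq_ne1; rewrite /d; clear -r2 rlt1 e0; lra.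
  have H := leq_trans (R1 r c1) (R2 _ c2).
  have : eigenvalue T (d + d - (0 - r)).
    by rewrite -rank_eig_pos (leq_trans _ H) // rank_eig_pos eigT.
  rewrite eigT => /rmin; rewrite /d; clear -e0; lra.
have chain : forall j, (j < n)%N -> eigenvalue T (r + 2 * (j%:R * e)).
  elim => [_|j IH jn]; first by rewrite mul0r mulr0 addr0 eigT.
  have jn' : (j < n)%N by apply: ltnW.
  have IH' := IH jn'.
  have hj : j%:R * e <= 1 - 2 * e.
    have : (j + 2 <= n)%N by rewrite addn2.
    rewrite -(ler_nat R) natrD -/N => H.
    have : j%:R * e <= (N - 2) * e by rewrite ler_pM2r //; lra.
    by rewrite mulrBl Ne.
  have hj0 : 0 <= j%:R * e by apply: mulr_ge0 => //; exact: ltW.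
  have E : r + 2 * (j.+1%:R * e) = 0 - ((d + d) - (r + 2 * (j%:R * e))).
    by rewrite /d -addn1 natrD mulrDl mul1r; ring.
  move: (j%:R * e) hj hj0 IH' E => w hj hj0 IH' E.
  rewrite E -rank_eig_pos.
  apply: leq_trans (R1 _ _); last first.
    apply: sq_ne1; rewrite /d; clear -hj hj0 rlb rlt e0; lra.
  apply: leq_trans (R2 _ _); last first.
    apply: sq_ne1; rewrite /d; clear -hj hj0 rlb rlt e0; lra.
  by rewrite rank_eig_pos.
pose xs := [seq r + 2 * (j%:R * e) | j <- iota 0 n].
have injx : injective (fun j : nat => r + 2 * (j%:R * e)).
  move=> j k /= /addrI /(mulfI (lt0r_neq0 (ltr0n R 2))) /(mulIf (lt0r_neq0 e0)).
  by move/eqP; rewrite eqr_nat => /eqP.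
have HT : char_poly T = \prod_(x <- xs) ('X - x%:P).
  have := all_roots_prod_XsubC (p := char_poly T) (rs := xs).
  rewrite (monicP (char_poly_monic T)) scale1r; apply.
  - by rewrite size_char_poly size_map size_iota.
  - apply/allP => x /mapP [j]; rewrite mem_iota add0n => /andP [_ jn] ->.
    by rewrite -eigenvalue_root_char; exact: chain.
  - by rewrite uniq_rootsE map_inj_uniq ?iota_uniq.
have Hk : N * r + N - 1 = - (odd n)%:R.
  have xs0 : size xs != 0%N by rewrite size_map size_iota -lt0n.
  have := char_poly_trace T n0; rewrite HT.
  have := coefPn_prod_XsubC xs0; rewrite size_map size_iota => ->.
  move/eqP; rewrite eqr_opp => /eqP; rewrite trT big_map sum_iota -/N.
  rewrite mulrAC Ne mul1r => H; clear -H; lra.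
have evE : forall j, N * (r + 2 * (j%:R * e) + 1) = ev j.
  move=> j.
  have -> : N * (r + 2 * (j%:R * e) + 1) = N * r + N + 2 * j%:R * (N * e) by ring.
  rewrite Ne /ev; have E2 : (2 * j)%:R = 2 * j%:R :> R by rewrite natrM.
  have E3 : (2 * j + 1)%:R = 2 * j%:R + 1 :> R by rewrite natrD natrM.
  case: (odd n) Hk => Hk; rewrite ?E2 ?E3; rewrite /= ?mulr1n ?mulr0n ?oppr0 in Hk; clear -Hk; lra.
have eigA : forall j, (j < n)%N -> eigenvalue A (ev j).
  move=> j jn; rewrite -evE; have := eig_affine N 1 (chain j jn).
  by rewrite TQ.
have injev : injective ev.
  move=> j k; rewrite /ev; case: (odd n); move/eqP; rewrite eqr_nat.
    by rewrite eqn_pmul2l // => /eqP.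
  by rewrite eqn_add2r eqn_pmul2l // => /eqP.
pose es := [seq ev j | j <- iota 0 n].
have HA : char_poly A = \prod_(x <- es) ('X - x%:P).
  have := all_roots_prod_XsubC (p := char_poly A) (rs := es).
  rewrite (monicP (char_poly_monic A)) scale1r; apply.
  - by rewrite size_char_poly size_map size_iota.
  - apply/allP => x /mapP [j]; rewrite mem_iota add0n => /andP [_ jn] ->.
    by rewrite -eigenvalue_root_char; exact: eigA.
  - by rewrite uniq_rootsE map_inj_uniq ?iota_uniq.
split.
  move=> a; rewrite eigenvalue_root_char HA root_prod_XsubC; split.
    by move/mapP => [j]; rewrite mem_iota add0n => /andP [_ jn] ->; exists j.
  by move=> [k kn ->]; apply/mapP; exists k; rewrite // mem_iota add0n kn.
move=> k kn; rewrite HA mu_prod_XsubC count_uniq_mem ?(map_inj_uniq injev) ?iota_uniq //.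
by rewrite map_f // mem_iota add0n kn.
Qed.
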